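(* Let $(\eta_k)_{k\ge1}$ be a sequence of real numbers and suppose there are $\varepsilon>0$, $C>0$, $D>0$, $\tilde\beta\in[0,1]$ and $k_0$ such that for all $k\ge k_0$ $$0\le\eta_k\le1-\varepsilon\quad\text{and}\quad \eta_{k+1}\le\eta_k\Big[1-\frac{C(1-\eta_k)}{k}\Big]+\frac{D}{k^{1+\tilde\beta}}.$$ Then $\limsup_{k\to\infty}\eta_k h(k)<\infty$, where $h(k)=k^{\tilde\beta}$ if $\tilde\beta<C$, $h(k)=k^{\tilde\beta}/\log k$ if $\tilde\beta=C$, and $h(k)=k^{C}$ if $\tilde\beta>C$. *)

(* Defs.v *)
From Stdlib Require Import Reals Lra Lia.
Open Scope R_scope.

(* Real powers of k are taken with Rpower (k > 0 for k >= 1). *)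
Definition rate_h (beta C : R) (k : nat) : R :=
  match Rlt_dec beta C with
  | left _ => Rpower (INR k) beta
  | right _ =>
      match Req_EM_T beta C with
      | left _ => Rpower (INR k) beta / ln (INR k)
      | right _ => Rpower (INR k) C
      end
  end.

Definition limsup_finite (u : nat -> R) : Prop :=
  exists M : R, exists N : nat, forall k : nat, (N <= k)%nat -> u k <= M.

(* Main.v *)
Require Import Defs.
From Stdlib Require Import Reals Lra Lia Psatz.
Open Scope R_scope.

Lemma ln_le_sub1 y : 0 < y -> ln y <= y - 1.
Proof. intro Hy. pose proof (exp_ineq1_le (ln y)). rewrite exp_ln in H; lra. Qed.

Lemma dln_bounds x : 0 < x -> 1/(x+1) <= ln (x+1) - ln x <= 1/x.
Proof.
  intro Hx. split.
  - assert (E: ln x = ln (x+1) + ln (x/(x+1))).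
    { rewrite <- ln_mult; try lra. f_equal. field. lra.
      apply Rdiv_lt_0_compat; lra. }
    pose proof (ln_le_sub1 (x/(x+1))) as H.
    assert (0 < x/(x+1)) by (apply Rdiv_lt_0_compat; lra).
    specialize (H H0).
    assert (x/(x+1) - 1 = - (1/(x+1))) by (field; lra). lra.
  - assert (E: ln (x+1) = ln x + ln ((x+1)/x)).
    { rewrite <- ln_mult; try lra. f_equal. field. lra.
      apply Rdiv_lt_0_compat; lra. }
    pose proof (ln_le_sub1 ((x+1)/x)) as H.
    assert (0 < (x+1)/x) by (apply Rdiv_lt_0_compat; lra).
    specialize (H H0).
    assert ((x+1)/x - 1 = 1/x) by (field; lra). lra.
Qed.

Lemma Rpower_succ x b : 0 < x ->
  Rpower (x+1) b = Rpower x b * exp (b * (ln (x+1) - ln x)).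
Proof. intro. unfold Rpower. rewrite <- exp_plus. f_equal. ring. Qed.

Lemma F2 x b : 0 < x -> 0 <= b -> (1 - b/x) * Rpower (x+1) b <= Rpower x b.
Proof.
  intros Hx Hb. rewrite Rpower_succ by lra.
  set (d := ln (x+1) - ln x). pose proof (dln_bounds x Hx) as [H1 H2]. fold d in H1, H2.
  pose proof (exp_ineq1_le (- (b*d))) as E1.
  assert (b * d <= b/x).
  { unfold Rdiv. replace (b * /x) with (b * (1/x)) by (field; lra). apply Rmult_le_compat_l; lra. }
  assert (Eq: exp (-(b*d)) * exp (b*d) = 1). { rewrite <- exp_plus. replace (-(b*d) + b*d) with 0 by ring. apply exp_0. }
  pose proof (exp_pos (b*d)). pose proof (exp_pos (Rpower x b)).
  assert (0 < Rpower x b) by (unfold Rpower; apply exp_pos).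
  assert ((1 - b/x) * exp (b*d) <= 1).
  { rewrite <- Eq. apply Rmult_le_compat_r; lra. }
  nra.
Qed.

Lemma F3 x s : 1 <= x -> 0 <= s <= 1 ->
  / Rpower (x+1) s <= / Rpower x s * (1 - s/(4*x)).
Proof.
  intros Hx Hs. rewrite Rpower_succ by lra.
  set (d := ln (x+1) - ln x). assert (0<x) by lra.
  pose proof (dln_bounds x H) as [H1 H2]. fold d in H1, H2.
  pose proof (exp_ineq1_le (s*d)) as E1.
  assert (s/(2*x) <= s * d).
  { apply Rle_trans with (s * (1/(x+1))).
    - unfold Rdiv. rewrite Rmult_1_l. apply Rmult_le_compat_l; [lra|].
      apply Rinv_le_contravar; lra.
    - apply Rmult_le_compat_l; lra. }
  assert (0 < Rpower x s) by (unfold Rpower; apply exp_pos).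
  set (P := Rpower x s) in *. set (q := exp (s*d)) in *.
  assert (hq: 1 + s/(2*x) <= q) by lra.
  assert (0 <= s/(2*x) <= 1/2).
  { split. apply Rmult_le_pos; [lra| left; apply Rinv_0_lt_compat; lra].
    apply Rmult_le_reg_r with (2*x); [lra|]. unfold Rdiv. field_simplify; lra. }
  assert (s/(4*x) = (s/(2*x))/2) by (field; lra).
  rewrite H5. set (u := s/(2*x)) in *.
  rewrite Rinv_mult.
  apply Rmult_le_compat_l. left; apply Rinv_0_lt_compat; lra.
  apply Rle_trans with (/ (1+u)). apply Rinv_le_contravar; lra.
  apply Rmult_le_reg_r with (1+u); [lra|]. rewrite Rinv_l by lra. nra.
Qed.

Lemma Rpower_1plus y b : 0 < y -> Rpower y (1+b) = y * Rpower y b.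
Proof. intro. rewrite Rpower_plus, Rpower_1 by lra. ring. Qed.

Lemma Rpower_pos y b : 0 < Rpower y b.
Proof. unfold Rpower; apply exp_pos. Qed.

Lemma nat_ind_from (K : nat) (P : nat -> Prop) :
  P K -> (forall k, (K <= k)%nat -> P k -> P (S k)) -> forall k, (K <= k)%nat -> P k.
Proof.
  intros H0 HS k Hk. replace k with (K + (k - K))%nat by lia.
  induction (k - K)%nat as [|n IH]. rewrite Nat.add_0_r; auto.
  replace (K + S n)%nat with (S (K+n)) by lia. apply HS; [lia|auto].
Qed.

Lemma step1 xk xs P Q y a b D M : 0 < P -> 0 < Q -> 0 < y ->
  (1 - b/y) * Q <= P -> 0 <= 1 - a/y -> 0 <= xk -> xk * P <= M ->
  xs <= xk * (1 - a/y) + D / (y * P) -> D <= M * (a - b) -> xs * Q <= M.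
Proof.
  intros HP HQ Hy HF Ha Hx HM Hs HD.
  assert (xk <= M / P) by (apply Rmult_le_reg_r with P; [lra|]; unfold Rdiv; rewrite Rmult_assoc, Rinv_l; lra).
  assert (xs <= M * (1 - b/y) / P).
  { eapply Rle_trans; [exact Hs|].
    apply Rle_trans with (M / P * (1 - a/y) + D/(y*P)).
    apply Rplus_le_compat_r. apply Rmult_le_compat_r; lra.
    assert (M / P * (1 - a/y) + D/(y*P) = (M * (1 - a/y) + D / y)/P) by (field; lra).
    rewrite H0. unfold Rdiv at 1 3. apply Rmult_le_compat_r. left; apply Rinv_0_lt_compat; lra.
    assert (M*(1-a/y) + D/y - M*(1-b/y) = (D - M*(a-b))/y) by (field; lra).
    assert ((D - M*(a-b))/y <= 0). { unfold Rdiv. assert (0 < /y) by (apply Rinv_0_lt_compat; lra). nra. }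
    lra. }
  assert (0 <= M) by nra.
  apply Rle_trans with (M * (1 - b/y) / P * Q). apply Rmult_le_compat_r; lra.
  assert (M * (1 - b/y) / P * Q = M * ((1 - b/y) * Q) / P) by (field; lra). rewrite H2.
  apply Rmult_le_reg_r with P; [lra|]. unfold Rdiv. rewrite Rmult_assoc, Rinv_l by lra. nra.
Qed.

Lemma LL1 (x : nat -> R) (a b D : R) (K : nat) :
  0 <= b < a -> 0 <= D -> 1 <= INR K -> a <= INR K ->
  (forall k, (K <= k)%nat -> 0 <= x k /\
     x (S k) <= x k * (1 - a / INR k) + D / Rpower (INR k) (1+b)) ->
  exists M, forall k, (K <= k)%nat -> x k * Rpower (INR k) b <= M.
Proof.
  intros Hb HD HK1 HKa Hrec.
  exists (Rmax (x K * Rpower (INR K) b) (D/(a-b))).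
  apply nat_ind_from. apply Rmax_l.
  intros k Hk IH. set (M := Rmax _ _) in *.
  assert (HkK: INR K <= INR k) by (apply le_INR; lia).
  destruct (Hrec k Hk) as [Hx Hs].
  rewrite S_INR. apply (step1 (x k) (x (S k)) (Rpower (INR k) b) (Rpower (INR k + 1) b) (INR k) a b D M);
    try apply Rpower_pos; try lra; auto.
  - apply F2; lra.
  - assert (0 < a/INR k <= 1). split. apply Rdiv_lt_0_compat; lra.
    apply Rmult_le_reg_r with (INR k); [lra|]. unfold Rdiv. rewrite Rmult_assoc, Rinv_l; lra. lra.
  - rewrite <- Rpower_1plus by lra. exact Hs.
  - assert (D/(a-b) <= M) by apply Rmax_r.
    apply Rmult_le_reg_r with (/(a-b)). apply Rinv_0_lt_compat; lra.
    rewrite Rmult_assoc, Rinv_r by lra. lra.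
Qed.

Lemma step2 xk xs P Q y a D M L L' : 0 < P -> 0 < Q -> 2 <= y -> 0 < a -> 2*a <= y ->
  (1 - a/y) * Q <= P -> 0 <= xk -> xk * P <= M * L ->
  xs <= xk * (1 - a/y) + D / (y * P) -> L + 1/(y+1) <= L' -> 0 <= L -> 0 <= D -> 4*D <= M ->
  xs * Q <= M * L'.
Proof.
  intros HP HQ Hy Ha Hay HF Hx HM Hs HL HL0 HD HDM.
  set (c := 1 - a/y) in *.
  assert (Hc: 1/2 <= c <= 1).
  { unfold c. assert (a/y <= 1/2). apply Rmult_le_reg_r with y; [lra|]. unfold Rdiv. field_simplify; lra.
    assert (0 <= a/y) by (apply Rmult_le_pos; [lra| left; apply Rinv_0_lt_compat; lra]). lra. }
  set (r := Q / P).
  assert (Hr1: c * r <= 1). { unfold r. apply Rmult_le_reg_r with P; [lra|]. unfold Rdiv. field_simplify; lra. }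
  assert (Hr0: 0 < r) by (apply Rdiv_lt_0_compat; lra).
  assert (Hr2: r <= 2) by nra.
  assert (Hxk: xk <= M * L / P) by (apply Rmult_le_reg_r with P; [lra|]; unfold Rdiv; rewrite Rmult_assoc, Rinv_l; lra).
  assert (xs <= (M*L*c + D/y) / P).
  { eapply Rle_trans; [exact Hs|].
    assert ((M*L*c + D/y) / P = M*L/P*c + D/(y*P)) by (field; lra). rewrite H.
    apply Rplus_le_compat_r. apply Rmult_le_compat_r; lra. }
  assert (xs * Q <= (M*L*c + D/y) * r).
  { unfold r. replace ((M*L*c + D/y) * (Q/P)) with ((M*L*c + D/y)/P * Q) by (field; lra).
    apply Rmult_le_compat_r; lra. }
  assert (0 <= M) by lra.
  assert (M*L*c*r <= M*L) by (assert (0 <= M*L) by nra; nra).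
  assert (D/y*r <= 2*D/y).
  { unfold Rdiv. assert (0 < /y) by (apply Rinv_0_lt_compat; lra).
    replace (2*D*/y) with (D*/y*2) by ring. apply Rmult_le_compat_l; [|lra].
    apply Rmult_le_pos; lra. }
  assert (2*D/y <= M * (1/(y+1))).
  { apply Rmult_le_reg_r with (y*(y+1)); [nra|]. unfold Rdiv. field_simplify; try lra. nra. }
  assert (M*(L + 1/(y+1)) <= M * L') by (apply Rmult_le_compat_l; lra).
  nra.
Qed.

Lemma LL2 (x : nat -> R) (a D : R) (K : nat) :
  0 < a -> 0 <= D -> 2 <= INR K -> 2*a <= INR K ->
  (forall k, (K <= k)%nat -> 0 <= x k /\
     x (S k) <= x k * (1 - a / INR k) + D / Rpower (INR k) (1+a)) ->
  exists M, forall k, (K <= k)%nat -> x k * Rpower (INR k) a <= M * ln (INR k).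
Proof.
  intros Ha HD HK1 HKa Hrec.
  assert (HlK: 0 < ln (INR K)) by (rewrite <- ln_1; apply ln_increasing; lra).
  exists (Rmax (x K * Rpower (INR K) a / ln (INR K)) (4*D)).
  apply nat_ind_from.
  { set (A := x K * Rpower (INR K) a).
    assert (A / ln (INR K) <= Rmax (A / ln (INR K)) (4*D)) by apply Rmax_l.
    replace A with (A / ln (INR K) * ln (INR K)) at 1 by (field; lra).
    apply Rmult_le_compat_r; lra. }
  intros k Hk IH. set (M := Rmax _ _) in *.
  assert (HkK: INR K <= INR k) by (apply le_INR; lia).
  destruct (Hrec k Hk) as [Hx Hs].
  pose proof (dln_bounds (INR k)) as [Hd _]. lra.
  rewrite S_INR. apply (step2 (x k) (x (S k)) (Rpower (INR k) a) (Rpower (INR k + 1) a) (INR k) a D M (ln (INR k)));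
    try apply Rpower_pos; try lra; auto.
  - apply F2; lra.
  - rewrite <- Rpower_1plus by lra. exact Hs.
  - left. rewrite <- ln_1; apply ln_increasing; lra.
  - apply Rmax_r.
Qed.

Lemma step3 xk xs P Q S S' y a s D M N c : 0 < P -> 0 < Q -> 0 < S -> 0 < S' -> 1 <= y ->
  0 <= 1 - a/y -> (1 - a/y) * Q <= P -> Q <= c * P -> / S' <= / S * (1 - s/(4*y)) ->
  0 <= xk -> xk * P <= M - N / S ->
  xs <= xk * (1 - a/y) + D / (y * (P * S)) -> N * s = 4 * c * D -> 0 <= D -> 0 < c -> 0 < s ->
  xs * Q <= M - N / S'.
Proof.
  intros HP HQ HS HS' Hy Ha HF HQc HT Hx HM Hs HN HD Hc Hsp.
  assert (HN0: 0 <= N).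
  { apply Rmult_le_reg_r with s; [lra|]. rewrite HN. nra. }
  assert (xs * Q <= xk * (1 - a/y) * Q + D / (y*(P*S)) * Q).
  { rewrite <- Rmult_plus_distr_r. apply Rmult_le_compat_r; lra. }
  assert (xk * (1 - a/y) * Q <= xk * P).
  { rewrite Rmult_assoc. apply Rmult_le_compat_l; lra. }
  assert (D / (y*(P*S)) * Q <= c * D / (y * S)).
  { replace (D / (y*(P*S)) * Q) with (D / (y*S) * (Q / P)) by (field; lra).
    replace (c * D / (y * S)) with (D / (y*S) * c) by (field; lra).
    apply Rmult_le_compat_l. apply Rmult_le_pos; [lra|]. left; apply Rinv_0_lt_compat; nra.
    apply Rmult_le_reg_r with P; [lra|]. unfold Rdiv. field_simplify; lra. }
  assert (N / S' <= N / S - c * D / (y*S)).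
  { unfold Rdiv at 1. apply Rle_trans with (N * (/ S * (1 - s/(4*y)))).
    apply Rmult_le_compat_l; lra.
    apply Req_le. unfold Rdiv. replace (c*D) with (N*s/4) by lra. field. lra. }
  lra.
Qed.

Lemma LL3 (x : nat -> R) (a b D : R) (K : nat) :
  0 < a < b -> b - a <= 1 -> 0 <= D -> 1 <= INR K -> a <= INR K ->
  (forall k, (K <= k)%nat -> 0 <= x k /\
     x (S k) <= x k * (1 - a / INR k) + D / Rpower (INR k) (1+b)) ->
  exists M, forall k, (K <= k)%nat -> x k * Rpower (INR k) a <= M.
Proof.
  intros Hab Hs1 HD HK1 HKa Hrec.
  set (s := b - a). set (c := Rpower 2 a). set (N := 4 * c * D / s).
  assert (Hc: 0 < c) by apply Rpower_pos.
  assert (HN: N * s = 4 * c * D) by (unfold N; field; unfold s; lra).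
  assert (HN0: 0 <= N) by (unfold N; apply Rmult_le_pos; [nra| left; apply Rinv_0_lt_compat; unfold s; lra]).
  set (M := x K * Rpower (INR K) a + N / Rpower (INR K) s).
  assert (Hcl: forall k, (K <= k)%nat -> x k * Rpower (INR k) a <= M - N / Rpower (INR k) s).
  { apply nat_ind_from. unfold M; lra.
    intros k Hk IH.
    assert (HkK: INR K <= INR k) by (apply le_INR; lia).
    destruct (Hrec k Hk) as [Hx Hs].
    rewrite S_INR. apply (step3 (x k) (x (S k)) (Rpower (INR k) a) (Rpower (INR k + 1) a)
       (Rpower (INR k) s) (Rpower (INR k + 1) s) (INR k) a s D M N c);
      try apply Rpower_pos; try lra; auto.
    - assert (0 < a/INR k <= 1). split. apply Rdiv_lt_0_compat; lra.
      apply Rmult_le_reg_r with (INR k); [lra|]. unfold Rdiv. rewrite Rmult_assoc, Rinv_l; lra. lra.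
    - apply F2; lra.
    - unfold c. rewrite Rpower_mult_distr by lra. apply Rle_Rpower_l; lra.
    - apply F3; unfold s; lra.
    - replace (1 + b) with (1 + (a + s)) in Hs by (unfold s; ring).
      rewrite Rpower_1plus, Rpower_plus in Hs by lra. exact Hs.
    - unfold s; lra. }
  exists M. intros k Hk. specialize (Hcl k Hk).
  assert (0 <= N / Rpower (INR k) s).
  { apply Rmult_le_pos; [lra| left; apply Rinv_0_lt_compat; apply Rpower_pos]. }
  lra.
Qed.

Lemma stepW e es y t t' C g L M1 F : 1 <= y -> 2*C <= y -> 0 < C -> 0 <= e -> e <= M1 * t ->
  0 < t -> L * t <= 1 -> 0 <= t' <= t * (1 - g/(4*y)) ->
  es <= e * (1 - C * (1 - e) / y) + F -> 16 * (C * M1) <= L * g -> 0 <= L -> 0 <= F -> 0 < g ->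
  es * (1 + L * t') <= e * (1 + L * t) * (1 - C/y) + 2 * F.
Proof.
  intros Hy HyC HC He HeM Ht HLt Ht' Hes HL HL0 HF Hg.
  set (c := 1 - C/y).
  assert (Hc: 1/2 <= c <= 1).
  { unfold c. assert (C/y <= 1/2). apply Rmult_le_reg_r with y; [lra|]. unfold Rdiv. field_simplify; lra.
    assert (0 <= C/y) by (apply Rmult_le_pos; [lra| left; apply Rinv_0_lt_compat; lra]). lra. }
  set (E := C * M1).
  assert (HM1: 0 <= M1).
  { apply Rmult_le_reg_r with t; [lra|]. nra. }
  assert (HH1: es <= e * (c + E * t / y) + F).
  { eapply Rle_trans; [exact Hes|]. apply Rplus_le_compat_r.
    apply Rmult_le_compat_l; [lra|].
    unfold c, E. assert (C * (1 - e) / y = C/y - C * e / y) by (field; lra). rewrite H.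
    assert (C * e / y <= C * M1 * t / y).
    { unfold Rdiv. apply Rmult_le_compat_r. left; apply Rinv_0_lt_compat; lra.
      rewrite Rmult_assoc. apply Rmult_le_compat_l; lra. }
    lra. }
  assert (Hgy: 0 <= g/(4*y)) by (apply Rmult_le_pos; [lra|left; apply Rinv_0_lt_compat; lra]).
  assert (t' <= t) by nra.
  assert (L * t' <= L * t) by (apply Rmult_le_compat_l; lra).
  assert (0 <= L * t') by (apply Rmult_le_pos; lra).
  assert (Hw: 1 <= 1 + L * t' <= 2) by lra.
  assert (HH2: es * (1 + L*t') <= (e * (c + E*t/y) + F) * (1 + L*t')) by (apply Rmult_le_compat_r; lra).
  assert (HE0: 0 <= E) by (unfold E; nra).
  assert (HH3: 0 <= e * (c + E*t/y)).
  { apply Rmult_le_pos; [lra|]. assert (0 <= E * t / y) by (unfold Rdiv; apply Rmult_le_pos; [nra|left; apply Rinv_0_lt_compat; lra]). lra. }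
  assert (HH4: (c + E*t/y) * (1 + L*t') <= c * (1 + L*t)).
  { assert (1 + L*t' <= 1 + L*t - L*g*t/(4*y)).
    { assert (L*t' <= L*(t*(1 - g/(4*y)))) by (apply Rmult_le_compat_l; lra).
      replace (L * g * t / (4*y)) with (L * t * (g/(4*y))) by (field; lra). nra. }
    apply Rle_trans with ((c + E*t/y) * (1 + L*t - L*g*t/(4*y))).
    apply Rmult_le_compat_l; [|lra].
    assert (0 <= E * t / y) by (unfold Rdiv; apply Rmult_le_pos; [nra|left; apply Rinv_0_lt_compat; lra]). lra.
    apply Rmult_le_reg_r with (4*y*y/t). apply Rdiv_lt_0_compat; nra.
    replace ((c + E * t / y) * (1 + L * t - L * g * t / (4 * y)) * (4 * y * y / t))
      with (4*y*y*c/t + 4*y*y*c*L - c*L*g*y + 4*E*y + 4*E*y*L*t - E*L*g*t) by (field; lra).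
    replace (c * (1 + L * t) * (4 * y * y / t)) with (4*y*y*c/t + 4*y*y*c*L) by (field; lra).
    assert (4*E*y*(1 + L*t) <= c*L*g*y).
    { assert (4*E*(1+L*t) <= 8*E) by nra. assert (8*E <= c*L*g).
      { assert (0 <= (c - 1/2) * (L*g)) by (apply Rmult_le_pos; [lra | apply Rmult_le_pos; lra]). assert (16*E <= L*g) by (unfold E; lra). nra. }
      assert (0 <= (c*L*g - 4*E*(1+L*t))*y) by (apply Rmult_le_pos; lra). nra. }
    assert (0 <= E*L*g*t) by (apply Rmult_le_pos; [|lra]; apply Rmult_le_pos; nra).
    lra. }
  assert (e * (c + E*t/y) * (1 + L*t') <= e * (1 + L*t) * c).
  { rewrite Rmult_assoc. replace (e * (1 + L*t) * c) with (e * (c * (1 + L*t))) by ring.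
    apply Rmult_le_compat_l; lra. }
  nra.
Qed.

Lemma W (eta : nat -> R) (C D beta g L M1 : R) (K : nat) :
 0 < C -> 0 < g <= 1 -> 0 <= D -> 16*(C*M1) <= L*g -> 0 <= L -> 1 <= INR K -> 2*C <= INR K ->
 (forall k, (K<=k)%nat -> 0 <= eta k /\ eta k * Rpower (INR k) g <= M1 /\ L <= Rpower (INR k) g /\
    eta (S k) <= eta k * (1 - C*(1-eta k)/INR k) + D / Rpower (INR k) (1+beta)) ->
 forall k, (K<=k)%nat ->
   0 <= eta k * (1 + L / Rpower (INR k) g) /\
   eta (S k) * (1 + L / Rpower (INR (S k)) g) <=
     eta k * (1 + L / Rpower (INR k) g) * (1 - C / INR k) + (2*D) / Rpower (INR k) (1+beta).
Proof.
  intros HC Hg HD HL HL0 HK1 HK2 H k Hk.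
  destruct (H k Hk) as [He [HeM [HLp Hs]]].
  assert (HkK: INR K <= INR k) by (apply le_INR; lia).
  assert (HP: 0 < Rpower (INR k) g) by apply Rpower_pos.
  assert (HP': 0 < Rpower (INR k + 1) g) by apply Rpower_pos.
  split.
  { apply Rmult_le_pos; [lra|]. assert (0 <= L / Rpower (INR k) g) by (apply Rmult_le_pos; [lra|left; apply Rinv_0_lt_compat; lra]). lra. }
  replace (2 * D / Rpower (INR k) (1+beta)) with (2 * (D / Rpower (INR k) (1+beta))) by (unfold Rdiv; ring).
  rewrite S_INR. unfold Rdiv at 1 2.
  replace (1 - C * / INR k) with (1 - C / INR k) by reflexivity.
  apply (stepW (eta k) (eta (S k)) (INR k) (/ Rpower (INR k) g) (/ Rpower (INR k + 1) g) C g L M1);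
    try lra; auto.
  - apply Rmult_le_reg_r with (Rpower (INR k) g); [lra|]. rewrite Rmult_assoc, Rinv_l; lra.
  - apply Rinv_0_lt_compat; lra.
  - apply Rmult_le_reg_r with (Rpower (INR k) g); [lra|]. rewrite Rmult_assoc, Rinv_l; lra.
  - split. left; apply Rinv_0_lt_compat; lra. apply F3; lra.
  - apply Rmult_le_pos; [lra|left; apply Rinv_0_lt_compat; apply Rpower_pos].
Qed.

Theorem mainTheorem11
  (eta : nat -> R) (eps C D beta : R) (k0 : nat)
  (heps : 0 < eps) (hC : 0 < C) (hD : 0 < D)
  (hbeta0 : 0 <= beta) (hbeta1 : beta <= 1)
  (hbound : forall k : nat, (k0 <= k)%nat -> (1 <= k)%nat ->
      0 <= eta k /\ eta k <= 1 - eps)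
  (hrec : forall k : nat, (k0 <= k)%nat -> (1 <= k)%nat ->
      eta (S k) <= eta k * (1 - C * (1 - eta k) / INR k)
                   + D / Rpower (INR k) (1 + beta)) :
  limsup_finite (fun k => eta k * rate_h beta C k).
Proof.
  assert (Heps1: eps <= 1).
  { destruct (hbound (Nat.max k0 1) ltac:(lia) ltac:(lia)) as [A B]; lra. }
  destruct (Rle_lt_or_eq_dec 0 beta hbeta0) as [Hbp | Hb0].
  2:{ subst beta. exists 1, (Nat.max k0 1). intros k Hk. unfold rate_h.
      destruct (Rlt_dec 0 C) as [_|n]; [|lra].
      assert (0 < INR k) by (apply lt_0_INR; lia).
      rewrite Rpower_O by lra. destruct (hbound k ltac:(lia) ltac:(lia)) as [A B]; lra. }
  destruct (INR_unbounded (2 + C*eps + 2*C + INR k0)) as [K0 HK0].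
  assert (Hk0: (k0 <= K0)%nat).
  { assert (INR k0 < INR K0). { assert (0 <= C*eps) by nra. lra. } apply INR_lt in H; lia. }
  assert (HK0r: 2 <= INR K0 /\ C*eps <= INR K0 /\ 2*C <= INR K0).
  { assert (0 <= C*eps) by nra. assert (0 <= INR k0) by apply pos_INR. lra. }
  set (g := Rmin beta (C*eps/2)).
  assert (Hg: 0 < g /\ g < C*eps /\ g <= beta).
  { unfold g. split; [apply Rmin_glb_lt; nra|]. split.
    apply Rle_lt_trans with (C*eps/2). apply Rmin_r. nra. apply Rmin_l. }
  assert (Hge: forall k, (K0 <= k)%nat -> 1 <= INR k /\ INR K0 <= INR k /\ (k0 <= k)%nat /\ (1 <= k)%nat).
  { intros k Hk. assert (INR K0 <= INR k) by (apply le_INR; lia).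
    repeat split; try lra; try lia. apply INR_le. simpl. lra. }
  destruct (LL1 eta (C*eps) g D K0) as [M1 HM1]; try lra.
  { intros k Hk. destruct (Hge k Hk) as [Hk1 [_ [Hkk0 Hk1']]].
    destruct (hbound k Hkk0 Hk1') as [He1 He2]. split; [lra|].
    eapply Rle_trans; [apply hrec; auto|]. apply Rplus_le_compat.
    - apply Rmult_le_compat_l; [lra|]. unfold Rdiv.
      assert (C*eps <= C*(1 - eta k)) by (apply Rmult_le_compat_l; lra).
      assert (0 < / INR k) by (apply Rinv_0_lt_compat; lra).
      assert (C*eps*/INR k <= C*(1-eta k)*/INR k) by (apply Rmult_le_compat_r; lra). lra.
    - unfold Rdiv. apply Rmult_le_compat_l; [lra|]. apply Rinv_le_contravar. apply Rpower_pos.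
      apply Rle_Rpower; lra. }
  set (M1' := Rmax M1 0).
  assert (HM1': 0 <= M1') by apply Rmax_r.
  set (L := 16*(C*M1')/g).
  assert (HL0: 0 <= L) by (unfold L; apply Rmult_le_pos; [nra|left; apply Rinv_0_lt_compat; lra]).
  assert (HLg: 16*(C*M1') <= L*g) by (unfold L; right; field; lra).
  destruct (INR_unbounded (Rpower (L+1) (/g))) as [n2 Hn2].
  set (K1 := Nat.max K0 n2).
  assert (HK1: forall k, (K1 <= k)%nat -> L <= Rpower (INR k) g).
  { intros k Hk. assert (INR n2 <= INR k) by (apply le_INR; lia).
    apply Rle_trans with (Rpower (Rpower (L+1) (/g)) g).
    rewrite Rpower_mult. replace (/g * g) with 1 by (field; lra). rewrite Rpower_1; lra.
    apply Rle_Rpower_l. lra. split. apply Rpower_pos. lra. }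
  assert (HK1r: INR K0 <= INR K1) by (apply le_INR; lia).
  pose proof (W eta C D beta g L M1' K1 hC ltac:(lra) ltac:(lra) HLg HL0 ltac:(lra) ltac:(lra)) as HW.
  specialize (HW ltac:(intros k Hk; destruct (Hge k ltac:(lia)) as [Hk1 [_ [Hkk0 Hk1']]];
     destruct (hbound k Hkk0 Hk1') as [He1 He2];
     split; [lra| split; [apply Rle_trans with M1; [apply HM1; lia|apply Rmax_l] |
       split; [apply HK1; lia | apply hrec; auto]]])).
  set (z := fun k => eta k * (1 + L / Rpower (INR k) g)).
  assert (Hez: forall k, (K1 <= k)%nat -> 0 <= eta k /\ eta k <= z k).
  { intros k Hk. destruct (Hge k ltac:(lia)) as [Hk1 [_ [Hkk0 Hk1']]].
    destruct (hbound k Hkk0 Hk1') as [He1 He2]. unfold z.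
    assert (0 <= L / Rpower (INR k) g) by (apply Rmult_le_pos; [lra|left; apply Rinv_0_lt_compat; apply Rpower_pos]).
    split; nra. }
  assert (HK1b: 2 <= INR K1 /\ 2*C <= INR K1) by lra.
  unfold limsup_finite, rate_h.
  destruct (Rlt_dec beta C) as [Hlt|Hnlt].
  - destruct (LL1 z C beta (2*D) K1) as [M HM]; try lra. exact HW.
    exists M, K1. intros k Hk. destruct (Hez k Hk).
    eapply Rle_trans; [|apply (HM k Hk)]. apply Rmult_le_compat_r; [left; apply Rpower_pos|lra].
  - destruct (Req_EM_T beta C) as [Heq|Hneq].
    + destruct (LL2 z C (2*D) K1) as [M HM]; try lra.
      { intros k Hk. pose proof (HW k Hk) as X. rewrite Heq in X. exact X. }
      exists M, K1. intros k Hk. destruct (Hez k Hk).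
      assert (HkK: INR K1 <= INR k) by (apply le_INR; lia).
      assert (Hln: 0 < ln (INR k)) by (rewrite <- ln_1; apply ln_increasing; lra).
      specialize (HM k Hk). rewrite <- Heq in HM.
      apply Rle_trans with (z k * Rpower (INR k) beta / ln (INR k)).
      unfold Rdiv. rewrite <- Rmult_assoc. apply Rmult_le_compat_r. left; apply Rinv_0_lt_compat; lra.
      apply Rmult_le_compat_r; [left; apply Rpower_pos|lra].
      apply Rmult_le_reg_r with (ln (INR k)); [lra|]. unfold Rdiv. rewrite Rmult_assoc, Rinv_l; lra.
    + assert (C < beta) by lra.
      destruct (LL3 z C beta (2*D) K1) as [M HM]; try lra. exact HW.
      exists M, K1. intros k Hk. destruct (Hez k Hk).
      eapply Rle_trans; [|apply (HM k Hk)]. apply Rmult_le_compat_r; [left; apply Rpower_pos|lra].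
Qed.
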